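(* Let $(A,B,s,t,\Delta)$ be a left multiplier bialgebroid with a left counit $\varepsilon$. Then the image $B_0:=\varepsilon(A)$ is an idempotent, essential two-sided ideal in $B$, and $s(B_0)A=A=t(B_0)A$.
   Context: All algebras are associative complex algebras, not necessarily unital. For an algebra $A$ with $A_A$ non-degenerate, $L(A)$ denotes right $A$-module endomorphisms of $A$ (containing $A$ via left multiplication) and $M(A)=\{T\in L(A):aT\in A\ \forall a\}$. A left multiplier bialgebroid is a tuple $(A,B,s,t,\Delta)$: (i) $A,B$ algebras, $A_A$ non-degenerate and idempotent ($AA=A$); (ii) $s\colon B\to M(A)$ homomorphism, $t\colon B\to M(A)$ anti-homomorphism with commuting images, $s,t$ injective, $s(B)A=A=t(B)A$; ${}_BA\otimes A^B$, the quotient of $A\otimes A$ by the span of $s(x)a\otimes b-a\otimes t(x)b$, is non-degenerate as a right module over $A\otimes1$ and $1\otimes A$; (iii) $\Delta$ is an algebra homomorphism into the algebra of endomorphisms $T$ of ${}_BA\otimes A^B$ for which $T(a\otimes1),T(1\otimes b)\in{}_BA\otimes A^B$ exist with $T(a\otimes b)=T(a\otimes1)(1\otimes b)=T(1\otimes b)(a\otimes1)$; (iv) $\Delta(s(x)t(y)as(x')t(y'))=(t(y)\otimes s(x))\Delta(a)(t(y')\otimes s(x'))$; (v) if $\Delta(b)(1\otimes c)=\sum p_i\otimes q_i$ and $\Delta(b)(a\otimes1)=\sum u_j\otimes v_j$ then $\sum\Delta(p_i)(a\otimes1)\otimes q_i=\sum u_j\otimes\Delta(v_j)(1\otimes c)$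 in $A^{\otimes3}$ modulo the span of $s(x)a\otimes b\otimes c-a\otimes t(x)b\otimes c$ and $a\otimes s(x)b\otimes c-a\otimes b\otimes t(x)c$. Canonical maps $T_\lambda(a\otimes b)=\Delta(b)(a\otimes 1)$, $T_\rho(a\otimes b)=\Delta(a)(1\otimes b)$. A left counit is a linear $\varepsilon\colon A\to B$ with $\varepsilon(s(x)a)=x\varepsilon(a)$, $\varepsilon(t(y)a)=\varepsilon(a)y$, $\sum t(\varepsilon(c_i))d_i=ab$ whenever $T_\rho(a\otimes b)=\sum c_i\otimes d_i$, and $\sum s(\varepsilon(d_i))c_i=ba$ whenever $T_\lambda(a\otimes b)=\sum c_i\otimes d_i$. A two-sided ideal $I$ of $B$ is essential if $xI=0$ or $Ix=0$ implies $x=0$; idempotent means $II=I$. *)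

(* Defs.v *)
From Stdlib Require Import ClassicalEpsilon List.
From mathcomp Require Import all_boot all_algebra.
From mathcomp Require Import reals.
From mathcomp.real_closed Require Export complex.
Import GRing.Theory.
Set Implicit Arguments. Unset Strict Implicit. Unset Printing Implicit Defensive.
Local Open Scope ring_scope.

Section Defs.
Variable K : fieldType.

Definition linear_map (V W : lmodType K) (f : V -> W) : Prop :=
  forall (k : K) (u v : V), f (k *: u + v) = k *: f u + f v.

Definition in_span (V : lmodType K) (P : V -> Prop) (v : V) : Prop :=
  exists l : seq (K * V), (forall p, List.In p l -> P p.2) /\
    v = \sum_(p <- l) p.1 *: p.2.

Definition bilinear_map (U V W : lmodType K) (f : U -> V -> W) : Prop :=
  (forall v, linear_map (fun u => f u v)) /\ (forall u, linear_map (f u)).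

Definition trilinear_map (U V X W : lmodType K) (f : U -> V -> X -> W) : Prop :=
  (forall v x, linear_map (fun u => f u v x)) /\
  (forall u x, linear_map (fun v => f u v x)) /\
  (forall u v, linear_map (f u v)).

Definition is_algebra (A : lmodType K) (m : A -> A -> A) : Prop :=
  bilinear_map m /\ forall a b c, m a (m b c) = m (m a b) c.

Definition right_nondegenerate (A : lmodType K) (m : A -> A -> A) : Prop :=
  forall a, (forall b, m a b = 0) -> a = 0.

Definition idempotent_algebra (A : lmodType K) (m : A -> A -> A) : Prop :=
  forall a, in_span (fun w => exists x y, w = m x y) a.

Definition in_LA (A : lmodType K) (m : A -> A -> A) (T : A -> A) : Prop :=
  linear_map T /\ forall a b, T (m a b) = m (T a) b.

(* T in M(A): T in L(A) and aT in A for all a, i.e. b |-> a T(b) is left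
   multiplication by some element of A *)
Definition in_MA (A : lmodType K) (m : A -> A -> A) (T : A -> A) : Prop :=
  in_LA m T /\ forall a, exists c, forall b, m a (T b) = m c b.

Section Tensor.
Variables (A B : lmodType K) (s t : B -> A -> A).

(* (Q, i) is  _B A (x) A^B : the quotient of A (x) A by the span of
   s(x)a (x) b - a (x) t(x)b, i.e. the universal bilinear map that is
   balanced w.r.t. these relations. *)
Definition balanced2 (W : lmodType K) (f : A -> A -> W) : Prop :=
  forall x a b, f (s x a) b = f a (t x b).

Definition is_balanced_tensor2 (Q : lmodType K) (i : A -> A -> Q) : Prop :=
  bilinear_map i /\ balanced2 i /\
  forall (W : lmodType K) (f : A -> A -> W), bilinear_map f -> balanced2 f ->
    exists! g : Q -> W, linear_map g /\ forall a b, g (i a b) = f a b.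

Definition balanced3 (W : lmodType K) (f : A -> A -> A -> W) : Prop :=
  (forall x a b c, f (s x a) b c = f a (t x b) c) /\
  (forall x a b c, f a (s x b) c = f a b (t x c)).

Definition is_balanced_tensor3 (Q3 : lmodType K) (i3 : A -> A -> A -> Q3) : Prop :=
  trilinear_map i3 /\ balanced3 i3 /\
  forall (W : lmodType K) (f : A -> A -> A -> W), trilinear_map f -> balanced3 f ->
    exists! g : Q3 -> W, linear_map g /\ forall a b c, g (i3 a b c) = f a b c.

End Tensor.

(* the linear map Q -> W induced by f (meaningful when f is bilinear and
   balanced and (Q,i) is the balanced tensor product) *)
Definition tlift (A Q W : lmodType K) (i : A -> A -> Q) (f : A -> A -> W) : Q -> W :=
  epsilon (inhabits (fun _ => 0))
    (fun g : Q -> W => linear_map g /\ forall a b, g (i a b) = f a b).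

Section Bialgebroid.
Variables (A B : lmodType K) (mA : A -> A -> A) (mB : B -> B -> B)
  (s t : B -> A -> A) (Q : lmodType K) (i : A -> A -> Q)
  (Q3 : lmodType K) (i3 : A -> A -> A -> Q3).

(* right module structure of  _B A (x) A^B  over A (x) 1 and 1 (x) A *)
Definition ract1 (w : Q) (a : A) : Q := tlift i (fun u v => i (mA u a) v) w.
Definition ract2 (w : Q) (b : A) : Q := tlift i (fun u v => i u (mA v b)) w.

Definition lmult (m n : A -> A) (w : Q) : Q := tlift i (fun u v => i (m u) (n v)) w.

Definition j12 (w : Q) (c : A) : Q3 := tlift i (fun u v => i3 u v c) w.
Definition j23 (a : A) (w : Q) : Q3 := tlift i (fun u v => i3 a u v) w.

(* for T in the endomorphism algebra: T(a (x) 1) and T(1 (x) b) *)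
Definition Tat_left (T : Q -> Q) (a : A) : Q :=
  epsilon (inhabits 0) (fun w => forall b, T (i a b) = ract2 w b).
Definition Tat_right (T : Q -> Q) (b : A) : Q :=
  epsilon (inhabits 0) (fun w => forall a, T (i a b) = ract1 w a).

Definition in_End (T : Q -> Q) : Prop :=
  linear_map T /\
  (forall a, exists w, forall b, T (i a b) = ract2 w b) /\
  (forall b, exists w, forall a, T (i a b) = ract1 w a).

Definition left_multiplier_bialgebroid (Delta : A -> Q -> Q) : Prop :=
  is_algebra mA /\ is_algebra mB /\ right_nondegenerate mA /\ idempotent_algebra mA /\
  (forall x, in_MA mA (s x)) /\ (forall x, in_MA mA (t x)) /\
  (forall k x y a, s (k *: x + y) a = k *: s x a + s y a) /\
  (forall k x y a, t (k *: x + y) a = k *: t x a + t y a) /\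
  (forall x y a, s (mB x y) a = s x (s y a)) /\
  (forall x y a, t (mB x y) a = t y (t x a)) /\
  (forall x y a, s x (t y a) = t y (s x a)) /\
  (forall x y, s x = s y -> x = y) /\ (forall x y, t x = t y -> x = y) /\
  (forall a, in_span (fun w => exists x b, w = s x b) a) /\
  (forall a, in_span (fun w => exists x b, w = t x b) a) /\
  is_balanced_tensor2 s t i /\
  (forall w, (forall a, ract1 w a = 0) -> w = 0) /\
  (forall w, (forall a, ract2 w a = 0) -> w = 0) /\
  (forall a, in_End (Delta a)) /\
  (forall k a b w, Delta (k *: a + b) w = k *: Delta a w + Delta b w) /\
  (forall a b w, Delta (mA a b) w = Delta a (Delta b w)) /\
  (* (iv): c = a s(x') t(y') *)
  (forall x y x' y' a c, (forall b, mA c b = mA a (s x' (t y' b))) ->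
     forall w, Delta (s x (t y c)) w =
       lmult (t y) (s x) (Delta a (lmult (t y') (s x') w))) /\
  is_balanced_tensor3 s t i3 /\
  (forall (a b c : A) (pq uv : seq (A * A)),
     Tat_right (Delta b) c = \sum_(p <- pq) i p.1 p.2 ->
     Tat_left (Delta b) a = \sum_(p <- uv) i p.1 p.2 ->
     \sum_(p <- pq) j12 (Tat_left (Delta p.1) a) p.2 =
     \sum_(p <- uv) j23 p.1 (Tat_right (Delta p.2) c)).

Definition T_lambda (Delta : A -> Q -> Q) (a b : A) : Q := Tat_left (Delta b) a.
Definition T_rho (Delta : A -> Q -> Q) (a b : A) : Q := Tat_right (Delta a) b.

Definition left_counit (Delta : A -> Q -> Q) (eps : A -> B) : Prop :=
  linear_map eps /\
  (forall x a, eps (s x a) = mB x (eps a)) /\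
  (forall y a, eps (t y a) = mB (eps a) y) /\
  (forall a b (cd : seq (A * A)), T_rho Delta a b = \sum_(p <- cd) i p.1 p.2 ->
     \sum_(p <- cd) t (eps p.1) p.2 = mA a b) /\
  (forall a b (cd : seq (A * A)), T_lambda Delta a b = \sum_(p <- cd) i p.1 p.2 ->
     \sum_(p <- cd) s (eps p.2) p.1 = mA b a).
End Bialgebroid.

Section Ideals.
Variables (B : lmodType K) (mB : B -> B -> B).

Definition two_sided_ideal (I : B -> Prop) : Prop :=
  I 0 /\ (forall k x y, I x -> I y -> I (k *: x + y)) /\
  (forall x y, I y -> I (mB x y) /\ I (mB y x)).

Definition idempotent_ideal (I : B -> Prop) : Prop :=
  forall z, I z <-> in_span (fun w => exists x y, I x /\ I y /\ w = mB x y) z.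

Definition essential_ideal (I : B -> Prop) : Prop :=
  forall x, ((forall y, I y -> mB x y = 0) \/ (forall y, I y -> mB y x = 0)) -> x = 0.
End Ideals.

End Defs.

(* Main.v *)
From HB Require Import structures.
Require Import Defs.
From Stdlib Require Import ClassicalEpsilon FunctionalExtensionality PropExtensionality List.
From mathcomp Require Import all_boot all_algebra.
From mathcomp Require Import reals.
From mathcomp.real_closed Require Import complex.
From mathcomp Require Import boolp.
Import GRing.Theory.
Set Implicit Arguments. Unset Strict Implicit. Unset Printing Implicit Defensive.
Local Open Scope ring_scope.
Lemma span0 (K : fieldType) (V : lmodType K) (P : V -> Prop) : in_span P 0.
Proof. by exists nil; split=> //; rewrite big_nil. Qed.

Lemma spanD (K : fieldType) (V : lmodType K) (P : V -> Prop) u v :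
  in_span P u -> in_span P v -> in_span P (u + v).
Proof.
move=> [l1 [H1 ->]] [l2 [H2 ->]]; exists (l1 ++ l2); split; last by rewrite big_cat.
by move=> p /(in_app_or _ _ _) [/H1|/H2].
Qed.

Lemma spanZ (K : fieldType) (V : lmodType K) (P : V -> Prop) k u :
  in_span P u -> in_span P (k *: u).
Proof.
move=> [l [H ->]]; exists (map (fun p => (k * p.1, p.2)) l); split.
  by move=> p /in_map_iff [q [<- /H]].
by rewrite big_map scaler_sumr; apply: eq_bigr => p _; rewrite scalerA.
Qed.

Lemma spanN (K : fieldType) (V : lmodType K) (P : V -> Prop) u :
  in_span P u -> in_span P (- u).
Proof. by move=> H; rewrite -scaleN1r; apply: spanZ. Qed.

Lemma spanB (K : fieldType) (V : lmodType K) (P : V -> Prop) u v :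
  in_span P u -> in_span P v -> in_span P (u - v).
Proof. by move=> Hu Hv; apply: spanD => //; apply: spanN. Qed.

Lemma span1 (K : fieldType) (V : lmodType K) (P : V -> Prop) u :
  P u -> in_span P u.
Proof. by move=> H; exists [:: (1, u)]; split; [move=> p [<-|[]]|rewrite big_seq1 scale1r]. Qed.

Definition qrep (K : fieldType) (V : lmodType K) (P : V -> Prop) (q : V) : V :=
  epsilon (inhabits 0) (fun r => in_span P (r - q)).

Lemma qrep_spec (K : fieldType) (V : lmodType K) (P : V -> Prop) q :
  in_span P (qrep P q - q).
Proof.
by apply: (epsilon_spec (inhabits 0) (fun r => in_span P (r - q))); exists q; rewrite subrr; apply: span0.
Qed.

Lemma qrep_eq (K : fieldType) (V : lmodType K) (P : V -> Prop) q q' :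
  in_span P (q - q') -> qrep P q = qrep P q'.
Proof.
move=> H; rewrite /qrep.
have -> : (fun r => in_span P (r - q)) = (fun r => in_span P (r - q')); last by [].
apply: functional_extensionality => r.
apply: propositional_extensionality; split=> Hr.
  by have := spanD Hr H; rewrite addrA subrK.
by have := spanB Hr H; rewrite opprB addrA subrK.
Qed.

Lemma qrep_rep (K : fieldType) (V : lmodType K) (P : V -> Prop) q :
  qrep P (qrep P q) = qrep P q.
Proof. exact: qrep_eq (qrep_spec P q). Qed.

Definition quotT (K : fieldType) (V : lmodType K) (P : V -> Prop) :=
  {q : V | qrep P q = q}.

HB.instance Definition _ (K : fieldType) (V : lmodType K) (P : V -> Prop) :=
  gen_eqMixin (quotT P).
HB.instance Definition _ (K : fieldType) (V : lmodType K) (P : V -> Prop) :=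
  gen_choiceMixin (quotT P).

Definition qmk (K : fieldType) (V : lmodType K) (P : V -> Prop) (q : V) : quotT P :=
  exist _ (qrep P q) (qrep_rep P q).

Lemma qmk_val (K : fieldType) (V : lmodType K) (P : V -> Prop) (x : quotT P) :
  qmk P (proj1_sig x) = x.
Proof.
case: x => q e; rewrite /qmk /=; move: (qrep_rep P q); rewrite e => e'.
by rewrite (eq_irrelevance e' e).
Qed.

Lemma qmk_eq (K : fieldType) (V : lmodType K) (P : V -> Prop) q q' :
  in_span P (q - q') -> qmk P q = qmk P q'.
Proof.
move=> H; rewrite /qmk; move: (qrep_rep P q) (qrep_rep P q').
rewrite (qrep_eq H) => e1 e2; by rewrite (eq_irrelevance e1 e2).
Qed.

Lemma qmk_rep (K : fieldType) (V : lmodType K) (P : V -> Prop) q :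
  in_span P (proj1_sig (qmk P q) - q).
Proof. exact: qrep_spec. Qed.

Section QOps.
Variables (K : fieldType) (V : lmodType K) (P : V -> Prop).
Local Notation W := (quotT P).
Local Notation mk := (qmk P).
Definition qzero : W := mk 0.
Definition qadd (x y : W) : W := mk (proj1_sig x + proj1_sig y).
Definition qopp (x : W) : W := mk (- proj1_sig x).
Definition qscale (k : K) (x : W) : W := mk (k *: proj1_sig x).

Lemma qaddE a b : qadd (mk a) (mk b) = mk (a + b).
Proof.
apply: qmk_eq; rewrite /= opprD addrACA.
exact: spanD (qmk_rep P a) (qmk_rep P b).
Qed.
End QOps.

Lemma qoppE (K : fieldType) (V : lmodType K) (P : V -> Prop) a :
  qopp (qmk P a) = qmk P (- a).
Proof. by apply: qmk_eq; rewrite /= -opprD; apply: spanN; apply: qmk_rep. Qed.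

Lemma qscaleE (K : fieldType) (V : lmodType K) (P : V -> Prop) k a :
  qscale k (qmk P a) = qmk P (k *: a).
Proof. by apply: qmk_eq; rewrite /= -scalerBr; apply: spanZ; apply: qmk_rep. Qed.

Lemma qind (K : fieldType) (V : lmodType K) (P : V -> Prop) (Pr : quotT P -> Prop) :
  (forall a, Pr (qmk P a)) -> forall x, Pr x.
Proof. by move=> H x; rewrite -(qmk_val x). Qed.

Lemma qaddA (K : fieldType) (V : lmodType K) (P : V -> Prop) : associative (@qadd K V P).
Proof.
move=> x y z; elim/qind: x; move=> a; elim/qind: y => b; elim/qind: z => c.
by rewrite !qaddE addrA.
Qed.
Lemma qaddC (K : fieldType) (V : lmodType K) (P : V -> Prop) : commutative (@qadd K V P).
Proof. by move=> x y; elim/qind: x => a; elim/qind: y => b; rewrite !qaddE addrC. Qed.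
Lemma qadd0 (K : fieldType) (V : lmodType K) (P : V -> Prop) : left_id (@qzero K V P) (@qadd K V P).
Proof. by move=> x; elim/qind: x => a; rewrite /qzero qaddE add0r. Qed.
Lemma qaddN (K : fieldType) (V : lmodType K) (P : V -> Prop) : left_inverse (@qzero K V P) (@qopp K V P) (@qadd K V P).
Proof. by move=> x; elim/qind: x => a; rewrite qoppE qaddE addNr. Qed.

HB.instance Definition _ (K : fieldType) (V : lmodType K) (P : V -> Prop) :=
  GRing.isZmodule.Build (quotT P) (@qaddA K V P) (@qaddC K V P) (@qadd0 K V P) (@qaddN K V P).

Lemma qscaleA (K : fieldType) (V : lmodType K) (P : V -> Prop) a b (v : quotT P) :
  qscale a (qscale b v) = qscale (a * b) v.
Proof. by elim/qind: v => c; rewrite !qscaleE scalerA. Qed.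
Lemma qscale1 (K : fieldType) (V : lmodType K) (P : V -> Prop) : left_id 1 (@qscale K V P).
Proof. by move=> v; elim/qind: v => c; rewrite qscaleE scale1r. Qed.
Lemma qscaleDr (K : fieldType) (V : lmodType K) (P : V -> Prop) :
  right_distributive (@qscale K V P) +%R.
Proof.
move=> k x y; elim/qind: x => a; elim/qind: y => b.
by rewrite /GRing.add /= qaddE !qscaleE qaddE scalerDr.
Qed.
Lemma qscaleDl (K : fieldType) (V : lmodType K) (P : V -> Prop) (v : quotT P) :
  {morph (@qscale K V P)^~ v: a b / a + b}.
Proof. by move=> a b; elim/qind: v => c; rewrite /GRing.add /= !qscaleE qaddE scalerDl. Qed.

HB.instance Definition _ (K : fieldType) (V : lmodType K) (P : V -> Prop) :=
  GRing.Zmodule_isLmodule.Build K (quotT P) (@qscaleA K V P) (@qscale1 K V P) (@qscaleDr K V P) (@qscaleDl K V P).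

Lemma qmk_linear (K : fieldType) (V : lmodType K) (P : V -> Prop) :
  linear_map (qmk P : V -> quotT P).
Proof.
move=> k u v.
change (qmk P (k *: u + v) = qadd (qscale k (qmk P u)) (qmk P v)).
by rewrite qscaleE qaddE.
Qed.
Section Gen.
Variable K : fieldType.

Lemma lin0 (V W : lmodType K) (f : V -> W) : linear_map f -> f 0 = 0.
Proof.
move=> Hf; have := Hf 1 0 0; rewrite !scale1r addr0 => H.
by apply: (addrI (f 0)); rewrite addr0 -H.
Qed.

Lemma linZ (V W : lmodType K) (f : V -> W) k u : linear_map f -> f (k *: u) = k *: f u.
Proof. by move=> Hf; have := Hf k u 0; rewrite !addr0 lin0 // addr0. Qed.

Lemma linD (V W : lmodType K) (f : V -> W) u v : linear_map f -> f (u + v) = f u + f v.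
Proof. by move=> Hf; have := Hf 1 u v; rewrite !scale1r. Qed.

Lemma lin_sum (V W : lmodType K) (f : V -> W) (I : Type) (l : seq I) (F : I -> V) :
  linear_map f -> f (\sum_(p <- l) F p) = \sum_(p <- l) f (F p).
Proof.
move=> Hf; elim: l => [|x l IH]; first by rewrite !big_nil lin0.
by rewrite !big_cons linD // IH.
Qed.

Lemma span_sum (V : lmodType K) (P : V -> Prop) (I : Type) (l : seq I) (F : I -> V) :
  (forall p, List.In p l -> in_span P (F p)) -> in_span P (\sum_(p <- l) F p).
Proof.
elim: l => [|x l IH] H; first by rewrite big_nil; apply: span0.
rewrite big_cons; apply: spanD; first by apply: H; left.
by apply: IH => p Hp; apply: H; right.
Qed.

Lemma span_map (V W : lmodType K) (f : V -> W) (P : V -> Prop) (P' : W -> Prop) a :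
  linear_map f -> in_span P a -> (forall w, P w -> in_span P' (f w)) -> in_span P' (f a).
Proof.
move=> Hf [l [Hl ->]] H; rewrite lin_sum //; apply: span_sum => p Hp.
by rewrite linZ //; apply: spanZ; apply: H; apply: Hl.
Qed.

Lemma span_in (V : lmodType K) (P I : V -> Prop) a :
  I 0 -> (forall k x y, I x -> I y -> I (k *: x + y)) -> (forall w, P w -> I w) ->
  in_span P a -> I a.
Proof.
move=> I0 Ic HP [l [Hl ->]]; elim: l Hl => [|x l IH] Hl; first by rewrite big_nil.
rewrite big_cons; apply: Ic; first by apply: HP; apply: Hl; left.
by apply: IH => p Hp; apply: Hl; right.
Qed.

Lemma id_linear (V : lmodType K) : linear_map (fun v : V => v).
Proof. by []. Qed.

Lemma tensor_span (A B Q : lmodType K) (s t : B -> A -> A) (i : A -> A -> Q) :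
  is_balanced_tensor2 s t i -> forall q, in_span (fun w => exists a b, w = i a b) q.
Proof.
move=> [Hbil [Hbal Hu]] q.
set P := (fun w => exists a b, w = i a b).
have [|//|g [_ Hun]] := Hu (quotT P) (fun _ _ => 0).
  by split=> [v|u] k x y; rewrite scaler0 addr0.
have H1 := Hun (fun _ => 0); have H2 := Hun (qmk P).
rewrite H1 in H2; last by split=> // k x y; rewrite scaler0 addr0.
have := H2 _; move=> {}H2.
have E : (fun _ : Q => (0 : quotT P)) = qmk P.
  apply: H2; split; first exact: qmk_linear.
  move=> a b; change (qmk P (i a b) = qmk P 0).
  by apply: qmk_eq; rewrite subr0; apply: span1; exists a, b.
have Eq : qmk P q = qmk P 0 by rewrite -E.
have Hq := qmk_rep P q; have H0 := qmk_rep P 0.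
rewrite Eq subr0 in Hq H0.
have := spanB H0 Hq; by rewrite opprB addrC subrK.
Qed.

Lemma tensor_decomp (A B Q : lmodType K) (s t : B -> A -> A) (i : A -> A -> Q) :
  is_balanced_tensor2 s t i -> forall q, exists cd : seq (A * A),
    q = \sum_(p <- cd) i p.1 p.2.
Proof.
move=> Ht q; have [l [Hl ->]] := tensor_span Ht q.
case: Ht => [[Hb1 Hb2] _].
elim: l Hl => [|x l IH] Hl; first by exists nil; rewrite !big_nil.
have [|cd Hcd] := IH; first by move=> p Hp; apply: Hl; right.
have [a [b Hx]] : exists a b, x.2 = i a b by apply: Hl; left.
exists ((x.1 *: a, b) :: cd); rewrite !big_cons Hcd /= Hx.
by rewrite (linZ _ _ (Hb1 b)).
Qed.

End Gen.
Theorem lemma3p6 (R : realType) (A B : lmodType R[i])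
  (mA : A -> A -> A) (mB : B -> B -> B) (s t : B -> A -> A)
  (Q : lmodType R[i]) (i2 : A -> A -> Q)
  (Q3 : lmodType R[i]) (i3 : A -> A -> A -> Q3)
  (Delta : A -> Q -> Q) (eps : A -> B) :
  left_multiplier_bialgebroid mA mB s t i2 i3 Delta ->
  left_counit mA mB s t i2 Delta eps ->
  let B0 := fun x : B => exists a : A, x = eps a in
  two_sided_ideal mB B0 /\ idempotent_ideal mB B0 /\ essential_ideal mB B0 /\
  (forall a : A, in_span (fun w => exists x b, B0 x /\ w = s x b) a) /\
  (forall a : A, in_span (fun w => exists x b, B0 x /\ w = t x b) a).
Proof.
move=> [_ [_ [_ [Hidem [HsM [HtM [Hslin [Htlin [HsMul [HtMul [_ [Hsinj [Htinj
  [_ [_ [Hten _]]]]]]]]]]]]]]]].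
move=> [Heps [Hes [Het [Hrho Hlam]]]] B0.
have Hdec := tensor_decomp Hten.
have Hrho' : forall u v, exists cd : seq (A * A),
    \sum_(p <- cd) t (eps p.1) p.2 = mA u v.
  move=> u v; have [cd Hcd] := Hdec (T_rho mA i2 Delta u v).
  by exists cd; apply: Hrho.
have Hlam' : forall u v, exists cd : seq (A * A),
    \sum_(p <- cd) s (eps p.2) p.1 = mA u v.
  move=> u v; have [cd Hcd] := Hdec (T_lambda mA i2 Delta v u).
  by exists cd; apply: Hlam.
have slin : forall x, linear_map (s x) by move=> x; case: (HsM x) => [[]].
have tlin : forall x, linear_map (t x) by move=> x; case: (HtM x) => [[]].
have s0 : forall a, s 0 a = 0.
  move=> a; have := Hslin 1 0 0 a; rewrite !scale1r addr0 => H.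
  by apply: (addrI (s 0 a)); rewrite addr0 -H.
have t0 : forall a, t 0 a = 0.
  move=> a; have := Htlin 1 0 0 a; rewrite !scale1r addr0 => H.
  by apply: (addrI (t 0 a)); rewrite addr0 -H.
have ideal : two_sided_ideal mB B0.
  split; first by exists 0; rewrite lin0.
  split; first by move=> k x y [a ->] [b ->]; exists (k *: a + b); rewrite Heps.
  move=> x y [a ->]; split; [exists (s x a)|exists (t x a)]; by rewrite ?Hes ?Het.
have [I0 [Ic Im]] := ideal.
split => //; split.
  move=> z; split.
    move=> [c ->]; apply: (span_map Heps (Hidem c)) => w [u [v ->]].
    have [cd <-] := Hrho' u v.
    rewrite lin_sum //; apply: span_sum => p _; rewrite Het.
    by apply: span1; exists (eps p.2), (eps p.1); split; [exists p.2|split; [exists p.1|]].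
  apply: span_in => // w [x [y [_ [Hy ->]]]]; exact: (Im x y Hy).1.
split.
  move=> x [Hx|Hx].
    apply: Hsinj; apply: functional_extensionality => a; rewrite s0.
    have := span_map (slin x) (Hidem a) (P' := fun w => w = 0).
    move=> H; apply: (span_in (P := fun w : A => w = 0) (I := fun w : A => w = 0)) => //.
    - by move=> k ? ? -> ->; rewrite scaler0 addr0.
    apply: H => w [u [v ->]]; apply: span1.
    have [cd <-] := Hlam' u v; rewrite lin_sum //; apply: big1_seq => p _.
    by rewrite -HsMul Hx ?s0 //; exists p.2.
  apply: Htinj; apply: functional_extensionality => a; rewrite t0.
  have := span_map (tlin x) (Hidem a) (P' := fun w => w = 0).
  move=> H; apply: (span_in (P := fun w : A => w = 0) (I := fun w : A => w = 0)) => //.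
  - by move=> k ? ? -> ->; rewrite scaler0 addr0.
  apply: H => w [u [v ->]]; apply: span1.
  have [cd <-] := Hrho' u v; rewrite lin_sum //; apply: big1_seq => p _.
  by rewrite -HtMul Hx ?t0 //; exists p.1.
split.
  move=> a; apply: (span_map (@id_linear _ A) (Hidem a)) => w [u [v ->]].
  have [cd <-] := Hlam' u v; apply: span_sum => p _; apply: span1.
  by exists (eps p.2), p.1; split => //; exists p.2.
move=> a; apply: (span_map (@id_linear _ A) (Hidem a)) => w [u [v ->]].
have [cd <-] := Hrho' u v; apply: span_sum => p _; apply: span1.
by exists (eps p.1), p.2; split => //; exists p.1.
Qed.
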